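(* Let $U$ be an $n$-qubit Clifford circuit, $L$ a finite set of its wires, and $B\in\mathbb{F}_2^{3|L|\times 2n}$ the back-propagator matrix of $L$. Let $S$ be a stabilizer group on $n$ qubits (an abelian group of $n$-qubit Pauli operators not containing $-I$) with generators $g_1,\dots,g_r$; let $T\in\mathbb{F}_2^{r\times 2n}$ be the matrix whose rows are the binary encodings of $g_1,\dots,g_r$, and let $N$ be a matrix whose columns form a basis of $\{v\in\mathbb{F}_2^{2n}: Tv=0\}$. Then the number of assignments $w\mapsto P_w\in\{I,X,Y,Z\}$, $w\in L$, such that $\prod_{w\in L}B(P_w,w)\in\{cs: c\in\{\pm1,\pm i\},\ s\in S\}$ equals $2^{\,2|L|-\operatorname{rk}_{\mathbb{F}_2}(BN)}$.
   Context: An $n$-qubit Clifford circuit $U$ is a finite sequence of Clifford gates on $n$ qubits. Its directed acyclic graph has the gates as vertices, augmented by one dummy input vertex and one dummy output vertex per qubit, and a directed edge for each input/output relation between gates; these edges are called wires. Each wire $w$ carries a definite qubit $q(w)$. For a wire $w$, write $U=B_wA_w$, where $A_w$ is the product of the gates preceding $w$ in a topological ordering of the DAG and $B_w$ the product of the remaining gates. For $P\in\{X,Y,Z\}$, $P_w$ denotes the $n$-qubit Pauli acting as $P$ on qubit $q(w)$ and as identity elsewhere. The back-propagator is the $n$-qubit Pauli operator $B(P,w)=A_w^\dagger P_wA_w$; set $B(I,w)=I$. Each $n$-qubit Pauli operator, up to phase, is encoded as its binary symplectic vector in $\mathbb{F}_2^{2n}$; products of Paulis correspond to sums of encodings. The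 back-propagator matrix of $L$ is the matrix $B\in\mathbb{F}_2^{3|L|\times 2n}$ whose rows are indexed by $(P,w)\in\{X,Y,Z\}\times L$, the $(P,w)$ row being the encoding of $B(P,w)$. *)

(* Defs.v *)
From HB Require Import structures.
From mathcomp Require Import all_boot all_order all_algebra.
Set Implicit Arguments.
Unset Strict Implicit.
Unset Printing Implicit Defensive.
Import GRing.Theory.
Local Open Scope ring_scope.

Inductive pl := pI | pX | pY | pZ.

Definition pl_to_ord (p : pl) : 'I_4 :=
  match p with pI => inord 0 | pX => inord 1 | pY => inord 2 | pZ => inord 3 end.
Definition ord_to_pl (i : 'I_4) : pl :=
  match val i with 0 => pI | 1 => pX | 2 => pY | _ => pZ end%N.
Lemma pl_to_ordK : cancel pl_to_ord ord_to_pl.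
Proof. by case; rewrite /ord_to_pl /= inordK. Qed.
HB.instance Definition _ := Finite.copy pl (can_type pl_to_ordK).

(* The n-qubit Pauli group.  An element ((k, x), z) denotes the operator    *)
(*     i^k * X^x Z^z   (tensor product over the n qubits),                  *)
(* with k in Z/4 and x, z in F_2^n.  Its binary symplectic encoding is the  *)
(* row vector [x | z] in F_2^{2n} (here of length n + n).                   *)
(* Multiplication: X^x Z^z X^x' Z^z' = (-1)^(z.x') X^(x+x') Z^(z+z').       *)
Definition Pauli (n : nat) := ('I_4 * 'rV['F_2]_n * 'rV['F_2]_n)%type.

Section Pauli.
Variable n : nat.

Definition pphase (p : Pauli n) : 'I_4 := p.1.1.
Definition px (p : Pauli n) : 'rV['F_2]_n := p.1.2.
Definition pz (p : Pauli n) : 'rV['F_2]_n := p.2.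

Definition dotF2 (u v : 'rV['F_2]_n) : 'F_2 := (u *m v^T) 0 0.

Definition pmul (p q : Pauli n) : Pauli n :=
  (inord ((pphase p + pphase q + (if (val (dotF2 (pz p) (px q)) == 1)%N then 2 else 0))
           %% 4)%N,
   px p + px q, pz p + pz q).

Definition pscalar (k : 'I_4) : Pauli n := (k, 0, 0).
Definition pid : Pauli n := pscalar ord0.

Definition enc (p : Pauli n) : 'rV['F_2]_(n + n) := row_mx (px p) (pz p).

Definition delta (q : 'I_n) : 'rV['F_2]_n := \row_j (j == q)%:R.

(* P_q : the Pauli acting as P on qubit q and as identity elsewhere;
   Y = i X Z. *)
Definition pauli_on (P : pl) (q : 'I_n) : Pauli n :=
  match P with
  | pI => pid
  | pX => (ord0, delta q, 0)
  | pY => (inord 1, delta q, delta q)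
  | pZ => (ord0, 0, delta q)
  end.

Definition pprod (s : seq (Pauli n)) : Pauli n := foldr pmul pid s.

(* group generated by g_1, ..., g_r (the Pauli group is finite, so the
   generated group is the set of finite products of generators) *)
Inductive generated (r : nat) (g : 'I_r -> Pauli n) : Pauli n -> Prop :=
| gen_id : generated g pid
| gen_mul (i : 'I_r) (p : Pauli n) : generated g p -> generated g (pmul (g i) p).

(* Clifford gates, in the Heisenberg picture.  A gate G acting on the qubit *)
(* set gsupp is represented by its conjugation action P |-> G^dagger P G on *)
(* the Pauli group.  Clifford unitaries (up to a global phase) correspond   *)
(* exactly to the automorphisms of the Pauli group fixing the scalars; the  *)
(* gate acts only on gsupp, i.e. fixes every Pauli supported outside gsupp. *)
Record gate := Gate { gsupp : {set 'I_n}; gact : Pauli n -> Pauli n }.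

Definition is_clifford_gate (G : gate) : Prop :=
  [/\ bijective (gact G),
      {morph gact G : p q / pmul p q},
      (forall k, gact G (pscalar k) = pscalar k) &
      (forall p : Pauli n,
          (forall q, q \in gsupp G -> px p 0 q = 0 /\ pz p 0 q = 0) ->
          gact G p = p)].

Definition gate0 : gate := Gate set0 id.

(* A circuit is the sequence of its gates [G_1; ...; G_m], U = G_m ... G_1. *)
Definition circuit := seq gate.

(* Wires.  The wire (q, t) is the edge on qubit q leaving the vertex t of  *)
(* the DAG: the input vertex of qubit q when t = 0, and the gate G_t       *)
(* otherwise (which must act on q).                                        *)
Definition wireT (c : circuit) := ('I_n * 'I_(size c).+1)%type.

Definition is_wire (c : circuit) (w : wireT c) : bool :=
  (val w.2 == 0)%N || (w.1 \in gsupp (nth gate0 c (val w.2).-1)).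

(* For the wire w = (q, t), A_w = G_t ... G_1, and the back-propagator is
   A_w^dagger P_w A_w = G_1^dag (... (G_t^dag P_q G_t) ...) G_1. *)
Definition backprop (c : circuit) (P : pl) (w : wireT c) : Pauli n :=
  foldr (fun G acc => gact G acc) (pauli_on P w.1) (take (val w.2) c).

Definition bp_block (c : circuit) (L : {set wireT c}) (P : pl)
  : 'M['F_2]_(#|L|, n + n) :=
  \matrix_(i < #|L|, j < n + n) enc (backprop P (enum_val i)) 0 j.

Definition bp_matrix (c : circuit) (L : {set wireT c})
  : 'M['F_2]_(#|L| + (#|L| + #|L|), n + n) :=
  col_mx (bp_block L pX) (col_mx (bp_block L pY) (bp_block L pZ)).

End Pauli.

(* Main.v *)
Require Import Defs.
From HB Require Import structures.
From mathcomp Require Import all_boot all_order all_algebra zify.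
From mathcomp Require Import mxabelem.
Local Open Scope ring_scope.
Import GRing.Theory.

Lemma F2_cases (x : 'F_2) : x = 0 \/ x = 1.
Proof. case: x => [[|[|m]]] H; [left|right|]; try exact: val_inj. by []. Qed.

Section P.
Variable n : nat.
Lemma enc_pmul (p q : Pauli n) : enc (pmul p q) = enc p + enc q.
Proof. by rewrite /enc /pmul /px /pz /= add_row_mx. Qed.
Lemma enc_pscalar k : enc (pscalar n k) = 0.
Proof. by rewrite /enc /= row_mx0. Qed.

Variables (r : nat) (g : 'I_r -> Pauli n) (T : 'M['F_2]_(r, n + n)).
Hypothesis HT : forall i, row i T = enc (g i).

Lemma gen_sub s : generated g s -> (enc s <= T)%MS.
Proof.
elim => [|i p _ IH]; first by rewrite enc_pscalar sub0mx.
by rewrite enc_pmul addmx_sub // -HT row_sub.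
Qed.

Lemma sub_gen u : (u <= T)%MS -> exists s, generated g s /\ enc s = u.
Proof.
case/submxP => a ->; rewrite mulmx_sum_row.
rewrite -big_enum /=.
elim: (enum _) => [|i s [p [Hp Hs]]].
  by exists (pid n); split; [constructor | rewrite big_nil enc_pscalar].
rewrite big_cons; case: (F2_cases (a 0 i)) => ->.
  by exists p; rewrite scale0r add0r.
by exists (pmul (g i) p); split; [constructor | rewrite enc_pmul scale1r HT Hs].
Qed.

Variables (k : nat) (N : 'M['F_2]_(n + n, k)).
Hypothesis HNspan : forall v : 'cV['F_2]_(n + n),
      T *m v = 0 <-> exists a : 'cV['F_2]_k, v = N *m a.

Lemma subT_N (u : 'rV_(n + n)) : (u <= T)%MS <-> u *m N = 0.
Proof.
split.
  case/submxP => a ->; rewrite -mulmxA.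
  have -> : T *m N = 0.
    apply/matrixP => i j.
    have : T *m col j N = 0.
      by apply/HNspan; exists (delta_mx j 0); rewrite colE.
    rewrite colE mulmxA -colE => /(congr1 (fun M : 'cV_r => M i 0)).
    by rewrite !mxE.
  by rewrite mulmx0.
move=> HuN; rewrite submxE; apply/eqP/matrixP => i j.
have [a Ha] : exists a, col j (cokermx T) = N *m a.
  by apply/HNspan; rewrite colE mulmxA mulmx_coker mul0mx.
have := congr1 (fun M : 'cV_(n+n) => (u *m M) 0 0) Ha.
rewrite /= colE mulmxA -colE => H.
rewrite (mulmxA u N a) HuN mul0mx in H.
by move: H; rewrite (ord1 i) !mxE.
Qed.
Definition Fg (gs : seq (gate n)) (p : Pauli n) :=
  foldr (fun G acc => gact G acc) p gs.

Lemma Fg_props (gs : seq (gate n)) :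
  (forall i, (i < size gs)%N -> is_clifford_gate (nth (gate0 n) gs i)) ->
  (forall p q, Fg gs (pmul p q) = pmul (Fg gs p) (Fg gs q)) /\
  (forall ph, Fg gs (pscalar n ph) = pscalar n ph).
Proof.
elim: gs => [|G gs IH] H; first by split.
have [IH1 IH2] : (forall p q, Fg gs (pmul p q) = pmul (Fg gs p) (Fg gs q)) /\
  (forall ph, Fg gs (pscalar n ph) = pscalar n ph).
  by apply: IH => i Hi; exact: (H i.+1).
have [_ HG1 HG2 _] := H 0%N isT.
by split => [p q|ph] /=; rewrite ?IH1 ?IH2 ?HG1 ?HG2.
Qed.

Lemma pauli_onY (q : 'I_n) : pauli_on pY q =
  pmul (pscalar n (inord 1)) (pmul (pauli_on pX q) (pauli_on pZ q)).
Proof.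
rewrite /= /pmul /pphase /px /pz /= /dotF2 !mul0mx !mxE /= !add0r !addr0.
congr (_, _, _); apply: val_inj; rewrite /= !inordK //.
Qed.

Lemma take_cliff (c : seq (gate n)) t :
  (forall i, (i < size c)%N -> is_clifford_gate (nth (gate0 n) c i)) ->
  (forall i, (i < size (take t c))%N -> is_clifford_gate (nth (gate0 n) (take t c) i)).
Proof.
move=> H i; rewrite size_take => Hi.
have [Hit Hic] : (i < t)%N /\ (i < size c)%N.
  by move: Hi; case: ifP => H1 H2; lia.
by rewrite nth_take //; apply: H.
Qed.

Lemma dotF2_0l (u : 'rV['F_2]_n) : dotF2 0 u = 0.
Proof. by rewrite /dotF2 mul0mx mxE. Qed.


Lemma pmul_scalar_phase (p s : Pauli n) : enc p = enc s ->
  exists ph, p = pmul (pscalar n ph) s.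
Proof.
case: p => [[a x] z]; case: s => [[b x'] z'] /=.
rewrite /enc /px /pz /= => /eq_row_mx [-> ->].
exists (inord ((a + (4 - b)) %% 4)).
rewrite /pmul /pphase /px /pz /= dotF2_0l /= !add0r; congr (_, _, _).
apply: val_inj => /=; rewrite !inordK ?ltn_mod //.
have ha := ltn_ord a; have hb := ltn_ord b.
rewrite addn0 modnDml.
have -> : (a + (4 - b) + b = a + 4)%N by lia.
by rewrite modnDr modn_small.
Qed.
End P.
Section Q.
Variable n : nat.
Definition xb (P : pl) : 'F_2 := match P with pX | pY => 1 | _ => 0 end.
Definition zb (P : pl) : 'F_2 := match P with pZ | pY => 1 | _ => 0 end.

Variable (c : circuit n).
Hypothesis Hcliff : forall i, (i < size c)%N -> is_clifford_gate (nth (gate0 n) c i).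

Lemma enc_backprop P (w : wireT c) :
  enc (backprop P w) = xb P *: enc (backprop pX w) + zb P *: enc (backprop pZ w).
Proof.
have [H1 H2] := @Fg_props n _ (@take_cliff n c (val w.2) Hcliff).
rewrite /backprop -!/(Fg _ _ _).
case: P => /=; rewrite ?scale0r ?scale1r ?addr0 ?add0r //.
  by rewrite H2 enc_pscalar.
by rewrite -[(inord 1, delta w.1, delta w.1)]/(pauli_on pY w.1) pauli_onY H1 H2 H1 !enc_pmul enc_pscalar add0r.
Qed.
End Q.

Lemma enc_pprod n (s : seq (Pauli n)) : enc (pprod s) = \sum_(p <- s) enc p.
Proof.
elim: s => [|p s IH]; first by rewrite big_nil /pprod /= enc_pscalar.
by rewrite big_cons /pprod /= enc_pmul -IH.
Qed.

Lemma row_bp n (c : circuit n) (L : {set wireT c}) P i :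
  row i (bp_block L P) = enc (backprop P (enum_val i)).
Proof. by apply/rowP => j; rewrite !mxE. Qed.

Lemma rank_col3 (F : fieldType) m p (a b : 'M[F]_(m, p)) :
  \rank (col_mx a (col_mx (a + b) b)) = \rank (col_mx a b).
Proof.
rewrite -!addsmxE; apply/eqP; rewrite eqn_leq; apply/andP; split; apply: mxrankS.
  by rewrite !addsmx_sub addsmxSl /= col_mx_sub addsmxSr andbT addmx_sub_adds.
rewrite addsmx_sub addsmxSl /=; apply: submx_trans (addsmxSr _ _).
by rewrite -addsmxE addsmxSr.
Qed.

Definition mk (x z : 'F_2) : pl :=
  if x == 0 then (if z == 0 then pI else pZ) else (if z == 0 then pX else pY).

Lemma mkK P : mk (xb P) (zb P) = P.
Proof. by case: P. Qed.
Lemma xb_mk x z : xb (mk x z) = x.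
Proof. by case: (F2_cases x) => ->; case: (F2_cases z) => ->. Qed.
Lemma zb_mk x z : zb (mk x z) = z.
Proof. by case: (F2_cases x) => ->; case: (F2_cases z) => ->. Qed.

Theorem mainTheorem2 (n : nat) (c : circuit n)
  (Hcliff : forall i, (i < size c)%N -> is_clifford_gate (nth (gate0 n) c i))
  (L : {set wireT c}) (HL : forall w, w \in L -> is_wire w)
  (r : nat) (g : 'I_r -> Pauli n)
  (Habel : forall a b, generated g a -> generated g b -> pmul a b = pmul b a)
  (HnotmI : ~ generated g (pscalar n (inord 2)))
  (T : 'M['F_2]_(r, n + n)) (HT : forall i, row i T = enc (g i))
  (k : nat) (N : 'M['F_2]_(n + n, k))
  (HNspan : forall v : 'cV['F_2]_(n + n),
      T *m v = 0 <-> exists a : 'cV['F_2]_k, v = N *m a)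
  (HNfree : forall a : 'cV['F_2]_k, N *m a = 0 -> a = 0)
  (A : {set {ffun {w : wireT c | w \in L} -> pl}})
  (HA : forall f, f \in A <->
      exists (ph : 'I_4) (s : Pauli n), generated g s /\
        pprod [seq backprop (f w) (val w) | w <- enum {: {w : wireT c | w \in L}}]
        = pmul (pscalar n ph) s) :
  #|A| = (2 ^ (2 * #|L| - \rank (bp_matrix L *m N)))%N.
Proof.
pose sig (i : 'I_#|L|) : {w : wireT c | w \in L} := exist _ (enum_val i) (enum_valP i).
pose rho (w : {w : wireT c | w \in L}) : 'I_#|L| := enum_rank_in (valP w) (val w).
have sigK : cancel sig rho by move=> i; rewrite /rho /sig /=; apply: enum_valK_in.
have rhoK : cancel rho sig.
  by move=> w; apply: val_inj; rewrite /= enum_rankK_in //; exact: valP.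
pose M := col_mx (bp_block L pX) (bp_block L pZ).
pose phi (f : {ffun {w : wireT c | w \in L} -> pl}) : 'rV['F_2]_(#|L| + #|L|) :=
  row_mx (\row_i xb (f (sig i))) (\row_i zb (f (sig i))).
have Henc : forall f : {ffun {w : wireT c | w \in L} -> pl}, enc (pprod [seq backprop (f w) (val w) |
     w <- enum {: {w : wireT c | w \in L}}]) = phi f *m M.
  move=> f; rewrite enc_pprod big_map big_enum /= mul_row_col !mulmx_sum_row.
  rewrite -big_split /= (reindex sig); last by exists rho => x _; [rewrite sigK | rewrite rhoK].
  apply: eq_bigr => i _; rewrite !mxE !row_bp.
  by rewrite (@enc_backprop n c Hcliff).
have HAe : A = phi @^-1: [set a | a *m (M *m N) == 0].
  apply/setP => f; rewrite !inE mulmxA -Henc; apply/idP/eqP.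
    case/HA => ph [s [Hs ->]].
    rewrite enc_pmul enc_pscalar add0r; apply/(@subT_N n r T k N HNspan _).
    exact: (@gen_sub n r g T HT).
  move/(@subT_N n r T k N HNspan _)/(@sub_gen n r g T HT _) => [s [Hs Hes]].
  have [ph Hph] := @pmul_scalar_phase n _ _ (esym Hes).
  by apply/HA; exists ph, s.
pose psi (a : 'rV['F_2]_(#|L| + #|L|)) : {ffun {w : wireT c | w \in L} -> pl} :=
  [ffun w => mk (a 0 (lshift _ (rho w))) (a 0 (rshift _ (rho w)))].
have phiK : cancel phi psi.
  move=> f; apply/ffunP => w; rewrite ffunE /phi !mxE.
  rewrite (unsplitK (inl _)) (unsplitK (inr _)) !mxE rhoK; exact: mkK.
have psiK : cancel psi phi.
  move=> a; apply/rowP => j; rewrite /phi mxE.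
  case: splitP => i Hi; rewrite !mxE ffunE sigK ?xb_mk ?zb_mk; congr (a 0 _); exact: val_inj.
rewrite HAe on_card_preimset; last by exists psi => x _; [rewrite phiK | rewrite psiK].
have -> : [set a | a *m (M *m N) == 0] = rowg (kermx (M *m N)).
  by apply/setP => a; rewrite !inE; apply/eqP/sub_kermxP.
rewrite card_rowg mxrank_ker card_Fp // mul2n -addnn.
have HY : bp_block L pY = bp_block L pX + bp_block L pZ.
  apply/row_matrixP => i.
  have -> : row i (bp_block L pX + bp_block L pZ) = row i (bp_block L pX) + row i (bp_block L pZ).
    by apply/rowP => j; rewrite !mxE.
  by rewrite !row_bp (@enc_backprop n c Hcliff) /= !scale1r.
by rewrite /bp_matrix HY !mul_col_mx mulmxDl rank_col3 -mul_col_mx.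
Qed.
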